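(* Let $R$ be a local ring with maximal ideal $\mathcal{M}$ such that $\mathcal{M}^2=(0)$ and, as a left $R$-module, $\mathcal{M}=Ry_1\oplus\cdots\oplus Ry_t$ with $t\ge 2$, where each $Ry_i$ is a minimal left ideal of $R$. If there exist nonzero elements $x_1,x_2\in\mathcal{M}$ with $x_1R\cap x_2R=(0)$, then the left $R$-module $(R\oplus R)/R(x_1,x_2)$ is not a direct sum of cyclic modules.
   Context: All rings have identity and modules are unital. A ring $R$ is local if it has a unique maximal left ideal $\mathcal{M}$. Here $R(x_1,x_2)=\{(rx_1,rx_2): r\in R\}$ is the cyclic left submodule of $R\oplus R$ generated by $(x_1,x_2)$. *)

(* Defs.v *)
From mathcomp Require Import all_boot all_algebra.
Set Implicit Arguments. Unset Strict Implicit. Unset Printing Implicit Defensive.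
Import GRing.Theory.
Local Open Scope ring_scope.

Section Defs.
Variable R : nzRingType.

Definition left_ideal (I : R -> Prop) : Prop :=
  [/\ I 0, (forall a b, I a -> I b -> I (a + b)) & (forall r a, I a -> I (r * a))].

Definition maximal_left_ideal (M : R -> Prop) : Prop :=
  [/\ left_ideal M, ~ M 1 &
      forall J : R -> Prop, left_ideal J -> (forall a, M a -> J a) -> ~ J 1 ->
        forall a, J a -> M a].

Definition local_ring_with (M : R -> Prop) : Prop :=
  maximal_left_ideal M /\
  forall J : R -> Prop, maximal_left_ideal J -> forall a, J a <-> M a.

Definition cyc_left (y : R) : R -> Prop := fun a => exists r, a = r * y.

Definition minimal_left_ideal (J : R -> Prop) : Prop :=
  [/\ left_ideal J, (exists a, J a /\ a != 0) &
      forall K : R -> Prop, left_ideal K -> (forall a, K a -> J a) ->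
        (forall a, K a -> a = 0) \/ (forall a, J a -> K a)].

Definition internal_dsum (M : R -> Prop) (t : nat) (y : 'I_t -> R) : Prop :=
  (forall m, M m <-> exists r : 'I_t -> R, m = \sum_(i < t) r i * y i) /\
  (forall r : 'I_t -> R, \sum_(i < t) r i * y i = 0 -> forall i, r i * y i = 0).

(* membership of a pair (u,v) in the cyclic submodule R(x1,x2) of R (+) R *)
Definition in_cyc2 (x1 x2 : R) (u v : R) : Prop :=
  exists c, u = c * x1 /\ v = c * x2.

(* (R (+) R)/R(x1,x2) is a direct sum of cyclic modules: there is a family
   (g_i)_{i in I} of elements of R (+) R (representatives of elements of the
   quotient) such that the cyclic submodules R [g_i] of the quotient form an
   internal direct sum equal to the whole quotient. Finite sums are indexed by
   duplicate-free sequences of indices. *)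
Definition quot_dsum_cyclic (x1 x2 : R) : Prop :=
  exists (I : eqType) (g : I -> R * R),
    (forall u v : R, exists (s : seq I) (r : I -> R),
        in_cyc2 x1 x2 (u - \sum_(i <- s) r i * (g i).1)
                      (v - \sum_(i <- s) r i * (g i).2)) /\
    (forall (s : seq I) (r : I -> R), uniq s ->
        in_cyc2 x1 x2 (\sum_(i <- s) r i * (g i).1) (\sum_(i <- s) r i * (g i).2) ->
        forall i, i \in s -> in_cyc2 x1 x2 (r i * (g i).1) (r i * (g i).2)).

End Defs.

(* Main.v *)
Require Import Defs.
From mathcomp Require Import all_boot all_algebra.
From Stdlib Require Import Classical.
Import GRing.Theory.
Local Open Scope ring_scope.

Lemma regroup (R : nzRingType) (I : eqType) (s u : seq I) (F : I -> R) :
  uniq u -> {subset s <= u} ->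
  \sum_(i <- s) F i = \sum_(k <- u) \sum_(i <- s | i == k) F i.
Proof.
move=> Uu Su.
under [RHS]eq_bigr do rewrite big_mkcond.
rewrite [RHS]exchange_big /=; apply: eq_big_seq => i Hi.
rewrite -big_mkcond -big_filter.
have -> : [seq k <- u | i == k] = [:: i].
  rewrite -(filter_pred1_uniq Uu (Su _ Hi)); apply: eq_filter => k /=.
  by rewrite eq_sym.
by rewrite big_seq1.
Qed.

Lemma leftinv (R : nzRingType) (M : R -> Prop) a :
  maximal_left_ideal M -> (forall a b, M a -> M b -> a * b = 0) ->
  ~ M a -> exists b, b * a = 1.
Proof.
move=> [[M0 MD MM] M1 Mmax] Msq Ma.
pose J := fun z => exists r m, M m /\ z = r * a + m.
have LJ : left_ideal J.
  split.
  - by exists 0, 0; split => //; rewrite mul0r addr0.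
  - move=> z w [r1 [m1 [Hm1 ->]]] [r2 [m2 [Hm2 ->]]].
    exists (r1 + r2), (m1 + m2); split; first exact: MD.
    by rewrite mulrDl -!addrA (addrCA m1).
  - move=> q z [r1 [m1 [Hm1 ->]]]; exists (q * r1), (q * m1); split; first exact: MM.
    by rewrite mulrDr mulrA.
have J1 : J 1.
  apply: NNPP => nJ1; apply: Ma; apply: (Mmax J LJ _ nJ1).
  - by move=> m Hm; exists 0, m; split => //; rewrite mul0r add0r.
  - by exists 1, 0; split => //; rewrite mul1r addr0.
case: J1 => [b [m [Hm E]]].
exists ((1 + m) * b); rewrite -mulrA.
have -> : b * a = 1 - m by rewrite E addrK.
by rewrite mulrDl mul1r mulrBr mulr1 (Msq m m Hm Hm) subr0 subrK.
Qed.

Lemma unitM (R : nzRingType) (M : R -> Prop) a :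
  maximal_left_ideal M -> (forall a b, M a -> M b -> a * b = 0) ->
  ~ M a -> exists b, b * a = 1 /\ a * b = 1.
Proof.
move=> HM Msq Ma.
have [b Hb] := @leftinv _ M _ HM Msq Ma.
have Mb : ~ M b.
  move=> Mb; case: HM => [[M0 MD MM] M1 _].
  have Me : M (a * b) by exact: MM.
  have ee : (a * b) * (a * b) = a * b by rewrite mulrA -(mulrA a b a) Hb mulr1.
  have e0 : a * b = 0 by rewrite -ee (Msq _ _ Me Me).
  have : b = 0 by rewrite -(mul1r b) -Hb -mulrA e0 mulr0.
  by move=> b0; move: Hb; rewrite b0 mul0r => /eqP; rewrite eq_sym oner_eq0.
have [c Hc] := @leftinv _ M _ HM Msq Mb.
have ca : c = a by rewrite -(mulr1 c) -Hb mulrA Hc mul1r.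
by exists b; split => //; rewrite -ca.
Qed.

Theorem lemma2p1 (R : nzRingType) (M : R -> Prop) (t : nat) (y : 'I_t -> R)
    (x1 x2 : R) :
  local_ring_with M ->
  (forall a b, M a -> M b -> a * b = 0) ->
  (2 <= t)%N ->
  internal_dsum M y ->
  (forall i, minimal_left_ideal (cyc_left (y i))) ->
  M x1 -> M x2 -> x1 != 0 -> x2 != 0 ->
  (forall a b : R, x1 * a = x2 * b -> x1 * a = 0) ->
  ~ quot_dsum_cyclic x1 x2.
Proof.
move=> [HM _] Msq _ _ _ Mx1 Mx2 nx1 nx2 Hint [I [g [Hgen Hind]]].
have HM' := HM; case: HM' => [[M0 MD MM] M1 _].
have [s [r [c [E1 E2]]]] := Hgen 1 0.
have [s' [r' [c' [F1 F2]]]] := Hgen 0 1.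
pose u := undup (s ++ s').
have Uu : uniq u by exact: undup_uniq.
have Ss : {subset s <= u} by move=> i Hi; rewrite mem_undup mem_cat Hi.
have Ss' : {subset s' <= u} by move=> i Hi; rewrite mem_undup mem_cat Hi orbT.
pose C k := \sum_(i <- s | i == k) x1 * r i + \sum_(i <- s' | i == k) x2 * r' i.
have key : forall G : I -> R, \sum_(k <- u) C k * G k =
    x1 * \sum_(i <- s) r i * G i + x2 * \sum_(i <- s') r' i * G i.
  move=> G; rewrite !mulr_sumr (@regroup _ _ s u _ Uu Ss) (@regroup _ _ s' u _ Uu Ss') -big_split /=.
  apply: eq_bigr => k _; rewrite mulrDl !mulr_suml; congr (_ + _);
    by apply: eq_bigr => i /eqP ->; rewrite mulrA.
have S1 : \sum_(i <- s) r i * (g i).1 = 1 - c * x1 by rewrite -E1 opprB addrC subrK.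
have S2 : \sum_(i <- s) r i * (g i).2 = - (c * x2) by rewrite -E2 sub0r opprK.
have S1' : \sum_(i <- s') r' i * (g i).1 = - (c' * x1) by rewrite -F1 sub0r opprK.
have S2' : \sum_(i <- s') r' i * (g i).2 = 1 - c' * x2 by rewrite -F2 opprB addrC subrK.
have Mc1 : M (c * x1) by exact: MM.
have Mc1' : M (c' * x1) by exact: MM.
have Mc2 : M (c * x2) by exact: MM.
have Mc2' : M (c' * x2) by exact: MM.
have K1 : \sum_(k <- u) C k * (g k).1 = x1.
  by rewrite key S1 S1' mulrBr mulr1 mulrN (Msq _ _ Mx1 Mc1) (Msq _ _ Mx2 Mc1') subr0 oppr0 addr0.
have K2 : \sum_(k <- u) C k * (g k).2 = x2.
  by rewrite key S2 S2' mulrBr mulr1 mulrN (Msq _ _ Mx1 Mc2) (Msq _ _ Mx2 Mc2') subr0 oppr0 add0r.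
have Hc : in_cyc2 x1 x2 (\sum_(k <- u) C k * (g k).1) (\sum_(k <- u) C k * (g k).2).
  by exists 1; rewrite !mul1r K1 K2.
have Hk := Hind u C Uu Hc.
suff : \sum_(k <- u) C k * (g k).1 = 0 by rewrite K1 => /eqP; rewrite (negPf nx1).
rewrite big_seq big1 // => k /Hk [d [D1 D2]].
case: (classic (M (g k).1)) => [Ma | Ma].
  rewrite /C mulrDl !mulr_suml big1 ?add0r.
  - by apply: big1 => i _; rewrite -mulrA (Msq _ _ Mx2 (MM _ _ Ma)).
  - by move=> i _; rewrite -mulrA (Msq _ _ Mx1 (MM _ _ Ma)).
have [a' [_ Ha']] := @unitM _ M _ HM Msq Ma.
rewrite D1.
case: (classic (M d)) => [Md | Md]; first exact: Msq.
have [e [He _]] := @unitM _ M _ HM Msq Md.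
have Ck : C k = d * x1 * a' by rewrite -D1 -mulrA Ha' mulr1.
have Hx : x1 * (a' * (g k).2) = x2 * 1.
  rewrite mulr1 -[LHS]mul1r -[X in X * _ = _]He -[RHS]mul1r -[X in _ = X * _]He.
  by rewrite -!mulrA -D2 Ck !mulrA.
have := Hint _ _ Hx; rewrite Hx mulr1 => x20.
by move: nx2; rewrite x20 eqxx.
Qed.
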